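(* Let $Z$ be a random variable that is moment bounded with parameter $L>0$, let $k\ge1$ be an integer, $S\subseteq[k]$ a nonempty set, and $d_t$ a positive integer for each $t\in S$. Let $D=\sum_{t\in S}td_t$ and $d=\sum_{t\in S}d_t$. Then $$\left|\mathbb E\Big[\prod_{t\in S}(Z^t)^{d_t}\Big]\right|\le\min_{t\in S}\left\{\frac{L^{D-t}\,D!\,\mathbb E[|Z|^t]}{t!}\right\}$$ and $$\left|\mathbb E\Big[\prod_{t\in S}\big(Z^t-\mathbb E[Z^t]\big)^{d_t}\Big]\right|\le\min_{t\in S}\left\{\frac{2^dL^{D-t}\,D!\,\mathbb E[|Z|^t]}{t!}\right\}.$$
   Context: A random variable $Z$ is moment bounded with parameter $L>0$ if for every integer $i\ge1$, $\mathbb E[|Z|^i]\le iL\,\mathbb E[|Z|^{i-1}]$. *)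

(* Defs.v *)
From HB Require Import structures.
From mathcomp Require Import all_boot all_order all_algebra.
From mathcomp Require Import all_classical all_reals all_analysis.
Set Implicit Arguments. Unset Strict Implicit. Unset Printing Implicit Defensive.
Import Order.TTheory GRing.Theory Num.Theory.

Local Open Scope ring_scope.
Local Open Scope ereal_scope.

Definition moment_bounded {d} {T : measurableType d} {R : realType}
  (P : probability T R) (Z : T -> R) (L : R) : Prop :=
  forall i : nat, (1 <= i)%N ->
    'E_P[fun x => (`|Z x| ^+ i)%R] <= (i%:R * L)%:E * 'E_P[fun x => (`|Z x| ^+ i.-1)%R].

(* Main.v *)
Require Import Defs.
From HB Require Import structures.
From mathcomp Require Import all_boot all_order all_algebra.
From mathcomp Require Import all_classical all_reals all_analysis.
From mathcomp Require Import ring lra zify measurable_realfun.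
Import Order.TTheory GRing.Theory Num.Theory.
Local Open Scope ring_scope.
Local Open Scope ereal_scope.

Lemma fact_mul_le a b : (a`! * b`! <= (a + b)`!)%N.
Proof.
have := bin_fact (leq_addr b a); rewrite addKn => <-.
by rewrite leq_pmull // bin_gt0 leq_addr.
Qed.

Lemma prod_nseq (R : realType) n (a : nat) (F : nat -> R) :
  (\prod_(i <- nseq n a) F i = F a ^+ n)%R.
Proof. by rewrite big_nseq; elim: n => //= n ->; rewrite exprS. Qed.

Lemma sum_nseq n (a : nat) (F : nat -> nat) :
  (\sum_(i <- nseq n a) F i = F a * n)%N.
Proof. by rewrite big_nseq; elim: n => [|n /= ->]; rewrite ?muln0 ?mulnS. Qed.

Section S.
Context d0 (T : measurableType d0) (R : realType) (P : probability T R)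
  (Z : {RV P >-> R}) (L : R) (hL : (0 < L)%R) (hZ : moment_bounded P Z L).

Let E n := 'E_P[fun x => (`|Z x| ^+ n)%R].

Lemma mZ : measurable_fun setT Z.
Proof. exact: measurable_funPT. Qed.

Lemma mAX n : measurable_fun setT (fun x => (`|Z x| ^+ n)%R).
Proof. apply: measurable_funX; apply: measurableT_comp; [exact: normr_measurable | exact: mZ]. Qed.

Lemma E_ge0 n : 0 <= E n.
Proof. by apply: expectation_ge0 => x; rewrite exprn_ge0. Qed.

Lemma E0 : E 0 = 1.
Proof.
rewrite /E (_ : (fun x => _) = cst 1%R); first by rewrite expectation_cst.
by apply/funext => x; rewrite expr0.
Qed.

Lemma Ebound n : E n <= (n`!%:R * L ^+ n)%:E.
Proof.
elim: n => [|n IH]; first by rewrite E0 expr0 mulr1.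
apply: le_trans (hZ n.+1 _) _ => //=.
apply: le_trans (lee_wpmul2l _ IH) _.
  by rewrite lee_fin mulr_ge0 // ltW.
by rewrite -EFinM lee_fin factS natrM exprS; rewrite le_eqVlt; apply/orP; left; apply/eqP; ring.
Qed.

Lemma Echain i n : E (i + n) <= (((i + n)`!)%:R / (i`!)%:R * L ^+ n)%:E * E i.
Proof.
elim: n => [|n IH].
  by rewrite addn0 expr0 mulr1 divff ?mul1e // pnatr_eq0 -lt0n fact_gt0.
rewrite addnS; apply: le_trans (hZ (i+n).+1 _) _ => //=.
apply: le_trans (lee_wpmul2l _ IH) _.
  by rewrite lee_fin mulr_ge0 // ltW.
rewrite muleA -EFinM; apply: lee_wpmul2r; first exact: E_ge0.
by rewrite lee_fin factS natrM exprS; rewrite le_eqVlt; apply/orP; left; apply/eqP; ring.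
Qed.


Lemma ED (f g : T -> R) : measurable_fun setT f -> measurable_fun setT g ->
  (forall x, 0 <= f x)%R -> (forall x, 0 <= g x)%R ->
  'E_P[fun x => f x + g x]%R = 'E_P[f] + 'E_P[g].
Proof.
move=> mf mg f0 g0; rewrite unlock.
under eq_integral do rewrite EFinD.
apply: ge0_integralD => //; first by move=> x _; rewrite lee_fin.
  exact/measurable_EFinP.
by move=> x _; rewrite lee_fin.
exact/measurable_EFinP.
Qed.

Lemma EZ (k : R) (f : T -> R) : (0 <= k)%R -> measurable_fun setT f ->
  (forall x, 0 <= f x)%R -> 'E_P[fun x => k * f x]%R = k%:E * 'E_P[f].
Proof.
move=> k0 mf f0; rewrite unlock.
under eq_integral do rewrite EFinM.
apply: ge0_integralZl_EFin => //; first by move=> x _; rewrite lee_fin.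
exact/measurable_EFinP.
Qed.

Lemma Ele (f g : T -> R) : measurable_fun setT f -> measurable_fun setT g ->
  (forall x, 0 <= f x <= g x)%R -> 'E_P[f] <= 'E_P[g].
Proof.
move=> mf mg fg; rewrite unlock; apply: ge0_le_integral => //.
- by move=> x _; rewrite lee_fin; case/andP: (fg x).
- exact/measurable_EFinP.
- exact/measurable_EFinP.
- by move=> x _; rewrite lee_fin; case/andP: (fg x).
Qed.

Lemma absE (f : T -> R) : measurable_fun setT f ->
  `| 'E_P[f] | <= 'E_P[fun x => `|f x|%R].
Proof.
move=> mf; rewrite unlock.
apply: le_trans (le_abse_integral _ _ _) _ => //; first exact/measurable_EFinP.
Qed.

Definition M n := fine (E n).

Lemma EM n : E n = (M n)%:E.
Proof.
rewrite /M fineK // ge0_fin_numE; last exact: E_ge0.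
exact: le_lt_trans (Ebound n) (ltry _).
Qed.

Lemma M_ge0 n : (0 <= M n)%R.
Proof. by rewrite -lee_fin -EM; exact: E_ge0. Qed.

Lemma M_le n : (M n <= n`!%:R * L ^+ n)%R.
Proof. by rewrite -lee_fin -EM; exact: Ebound. Qed.

Lemma abs_m s : (`| fine 'E_P[fun x => Z x ^+ s] | <= M s)%R.
Proof.
have h : `| 'E_P[fun x => (Z x ^+ s)%R] | <= (M s)%:E.
  rewrite -EM /E; apply: le_trans (@absE (fun x => Z x ^+ s)%R _) _.
    apply: measurable_funX; exact: mZ.
  by under eq_fun do rewrite normrX.
move: h; case: ('E_P[_]) => [r| |] /=; rewrite ?lee_fin //.
all: by rewrite normr0 M_ge0.
Qed.


Lemma mprodl (l : seq nat) : measurable_fun setT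
  (fun x => \prod_(s <- l) (`|Z x| ^+ s + M s))%R.
Proof.
apply: measurable_prod => s _; apply: measurable_funD; first exact: mAX.
exact: measurable_cst.
Qed.

Lemma mPoly c (l : seq nat) : measurable_fun setT
  (fun x => `|Z x| ^+ c * \prod_(s <- l) (`|Z x| ^+ s + M s))%R.
Proof. apply: measurable_funM; [exact: mAX | exact: mprodl]. Qed.

Lemma Poly_ge0 c (l : seq nat) x :
  (0 <= `|Z x| ^+ c * \prod_(s <- l) (`|Z x| ^+ s + M s))%R.
Proof.
rewrite mulr_ge0 ?exprn_ge0 // prodr_ge0 // => s _.
by rewrite addr_ge0 ?exprn_ge0 ?M_ge0.
Qed.

Lemma claim t (l : seq nat) c : (t <= c)%N ->
  'E_P[fun x => (`|Z x| ^+ c * \prod_(s <- l) (`|Z x| ^+ s + M s))%R]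
  <= (2 ^+ size l * L ^+ (c + \sum_(s <- l) s - t)
       * ((c + \sum_(s <- l) s)`!)%:R / (t`!)%:R)%:E * E t.
Proof.
elim: l c => [|s r IH] c htc.
  rewrite big_nil addn0 expr0 mul1r.
  under eq_fun do rewrite big_nil mulr1.
  have := Echain t (c - t); rewrite subnKC //.
  move=> h; rewrite (_ : L ^+ (c-t) * (c`!)%:R / (t`!)%:R = (c`!)%:R / (t`!)%:R * L ^+ (c-t))%R; [exact: h | ring].
rewrite (_ : (fun x => _) = fun x =>
   (`|Z x| ^+ (c + s) * \prod_(s0 <- r) (`|Z x| ^+ s0 + M s0)
    + M s * (`|Z x| ^+ c * \prod_(s0 <- r) (`|Z x| ^+ s0 + M s0)))%R); last first.
  by apply/funext => x; rewrite big_cons exprD; ring.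
rewrite ED; last 4 first.
- exact: mPoly.
- apply: measurable_funM; [exact: measurable_cst | exact: mPoly].
- by move=> x; exact: Poly_ge0.
- by move=> x; rewrite mulr_ge0 ?M_ge0 ?Poly_ge0.
rewrite EZ; last 3 first.
- exact: M_ge0.
- exact: mPoly.
- by move=> x; exact: Poly_ge0.
have h1 := IH (c + s)%N (leq_trans htc (leq_addr _ _)).
have h2 := IH c htc.
set A := (X in X%:E * E t) in h1.
set B := (X in X%:E * E t) in h2.
apply: le_trans (leeD h1 (lee_wpmul2l _ h2)) _; first by rewrite lee_fin M_ge0.
rewrite muleA -EFinM -ge0_muleDl; last 2 first.
- by rewrite lee_fin /A mulr_ge0 ?divr_ge0 ?mulr_ge0 ?exprn_ge0 // ltW.
- by rewrite lee_fin /B mulr_ge0 ?M_ge0 // mulr_ge0 ?divr_ge0 ?mulr_ge0 ?exprn_ge0 // ltW.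
apply: lee_wpmul2r; first exact: E_ge0.
rewrite lee_fin /A /B big_cons /= !addnA.
set S0 := (\sum_(j <- r) j)%N.
have e1 : (c + s + S0 - t = s + (c + S0 - t))%N.
  by lia.
rewrite e1 exprD exprS.
set K := (L ^+ (c + S0 - t))%R.
have K0 : (0 <= K)%R by rewrite exprn_ge0 // ltW.
have hf := fact_mul_le s (c + S0).
have key : (M s * ((c + S0)`!)%:R <= L ^+ s * ((c + s + S0)`!)%:R)%R.
  apply: le_trans (ler_wpM2r _ (M_le s)) _; first by rewrite ler0n.
  rewrite (_ : (_ * _ * _ = L ^+ s * ((s`!)%:R * ((c + S0)`!)%:R))%R); last by ring.
  apply: ler_wpM2l; first by rewrite exprn_ge0 // ltW.
  by rewrite -natrM ler_nat (addnC c s) -addnA.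
set F := (((c + s + S0)`!)%:R)%R.
set G := (((c + S0)`!)%:R)%R.
set H := ((t`!)%:R^-1)%R.
have H0 : (0 <= H)%R by rewrite invr_ge0 ler0n.
set N := (2 ^+ size r : R)%R.
have N0 : (0 <= N)%R by rewrite exprn_ge0.
have e2 : (M s * (N * K * G * H) = N * K * H * (M s * G))%R by ring.
rewrite /= in e2 *.
rewrite [X in (_ + X <= _)%R]e2.
have : (N * K * H * (M s * G) <= N * K * H * (L ^+ s * F))%R.
  by rewrite ler_wpM2l // !mulr_ge0.
move=> h3.
apply: le_trans (lerD (lexx _) h3) _.
rewrite le_eqVlt; apply/orP; left; apply/eqP; ring.
Qed.

End S.

Lemma prod_expr (R : realType) (z : R) (l : seq nat) :
  (\prod_(i <- l) z ^+ i = z ^+ (\sum_(i <- l) i)%N)%R.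
Proof. elim: l => [|a l IH]; first by rewrite !big_nil. by rewrite !big_cons IH exprD. Qed.

Lemma prod_flatten (R : realType) (F : nat -> R) (ss : seq (seq nat)) :
  (\prod_(x <- flatten ss) F x = \prod_(s <- ss) \prod_(x <- s) F x)%R.
Proof. elim: ss => [|a ss IH]; first by rewrite !big_nil. by rewrite /= big_cat big_cons IH. Qed.

Lemma sum_flatten (F : nat -> nat) (ss : seq (seq nat)) :
  (\sum_(x <- flatten ss) F x = \sum_(s <- ss) \sum_(x <- s) F x)%N.
Proof. elim: ss => [|a ss IH]; first by rewrite !big_nil. by rewrite /= big_cat big_cons IH. Qed.

Section conv.
Variables (k : nat) (S : {set 'I_k.+1}) (dt : 'I_k.+1 -> nat).
Let l := flatten [seq nseq (dt s) (nat_of_ord s) | s <- enum S].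

Lemma prod_conv (R : realType) (F : nat -> R) :
  (\prod_(s in S) F s ^+ dt s = \prod_(x <- l) F x)%R.
Proof.
rewrite /l prod_flatten big_map; symmetry; under eq_bigr do rewrite prod_nseq.
by rewrite big_enum.
Qed.

Lemma sum_conv (G : nat -> nat) :
  (\sum_(s in S) G s * dt s = \sum_(x <- l) G x)%N.
Proof.
rewrite /l sum_flatten big_map; symmetry; under eq_bigr do rewrite sum_nseq.
by rewrite big_enum.
Qed.

Lemma mem_conv (t : 'I_k.+1) : t \in S -> (0 < dt t)%N -> (nat_of_ord t) \in l.
Proof.
move=> tS dt0; apply/flattenP; exists (nseq (dt t) (nat_of_ord t)).
  by apply/mapP; exists t; rewrite ?mem_enum.
by rewrite mem_nseq dt0 eqxx.
Qed.
End conv.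

Theorem lemma3 (d0 : measure_display) (T : measurableType d0) (R : realType)
  (P : probability T R) (Z : {RV P >-> R}) (L : R) (hL : (0 < L)%R)
  (hZ : moment_bounded P Z L)
  (k : nat) (hk : (1 <= k)%N) (S : {set 'I_k.+1})
  (hS0 : ord0 \notin S) (hSne : S != finset.set0)
  (dt : 'I_k.+1 -> nat) (hdt : forall t, t \in S -> (0 < dt t)%N) :
  let D := (\sum_(t in S) t * dt t)%N in
  let dd := (\sum_(t in S) dt t)%N in
  (forall t, t \in S ->
     `| 'E_P[fun x => (\prod_(s in S) (Z x ^+ s) ^+ dt s)%R] |
       <= (L ^+ (D - t) * (D`!)%:R / (t`!)%:R)%:E * 'E_P[fun x => (`|Z x| ^+ t)%R])
  /\
  (forall t, t \in S ->
     `| 'E_P[fun x => (\prod_(s in S)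
                 (Z x ^+ s - fine 'E_P[fun y => (Z y ^+ s)%R]) ^+ dt s)%R] |
       <= (2 ^+ dd * L ^+ (D - t) * (D`!)%:R / (t`!)%:R)%:E
            * 'E_P[fun x => (`|Z x| ^+ t)%R]).
Proof.
move=> D dd.
set l := flatten [seq nseq (dt s) (nat_of_ord s) | s <- enum S].
have hD : D = (\sum_(x <- l) x)%N by rewrite /D (@sum_conv k S dt id).
have hdd : dd = size l.
  rewrite /dd -sum1_size -(@sum_conv k S dt (fun=> 1%N)).
  by apply: eq_bigr => s _; rewrite mul1n.
split=> t tS; have tl := @mem_conv k S dt t tS (hdt t tS);
  have pl := perm_to_rem tl; set r := rem (nat_of_ord t) l in pl;
  have hD' : D = (t + \sum_(x <- r) x)%N by rewrite hD (perm_big _ pl) big_cons.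
- under eq_fun do rewrite (@prod_conv k S dt R (fun n => Z _ ^+ n)%R) prod_expr -/l -hD.
  apply: le_trans (@absE _ _ _ P (fun x => Z x ^+ D)%R _) _.
    by apply: measurable_funX; exact: mZ.
  under eq_fun do rewrite normrX.
  have := @Echain _ _ _ P Z L hL hZ t (\sum_(x <- r) x)%N; rewrite -hD' => h.
  apply: le_trans h _; rewrite hD' addKn -hD'.
  apply: lee_wpmul2r; first exact: E_ge0.
  by rewrite lee_fin le_eqVlt; apply/orP; left; apply/eqP; ring.
- have EC := @claim _ _ _ P Z L hL hZ.
  have Mge0 := @M_ge0 _ _ _ P Z L hL hZ.
  set MM := @M _ _ _ P Z.
  have PG := @Poly_ge0 _ _ _ P Z L hL hZ.
  under eq_fun do rewrite (@prod_conv k S dt R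
     (fun n => Z _ ^+ n - fine 'E_P[fun y => (Z y ^+ n)%R])%R) -/l (perm_big _ pl) big_cons.
  set F := (fun (x : T) (n : nat) => Z x ^+ n - fine 'E_P[fun y => (Z y ^+ n)%R])%R.
  have mF n : measurable_fun setT (fun x => F x n).
    apply: measurable_funB; first by apply: measurable_funX; exact: mZ.
    exact: measurable_cst.
  have hF x n : (`|F x n| <= `|Z x| ^+ n + MM n)%R.
    apply: le_trans (ler_normB _ _) _; rewrite normrX lerD2l.
    exact: (@abs_m _ _ _ P Z L hL hZ).
  apply: le_trans (@absE _ _ _ P (fun x => F x t * \prod_(j <- r) F x j)%R _) _.
    apply: measurable_funM => //; exact: measurable_prod.
  apply: le_trans (@Ele _ _ _ P _
     (fun x => (`|Z x| ^+ t * \prod_(j <- r) (`|Z x| ^+ j + MM j)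
              + MM t * (`|Z x| ^+ 0 * \prod_(j <- r) (`|Z x| ^+ j + MM j)))%R) _ _ _) _.
  + apply: measurableT_comp; first exact: normr_measurable.
    apply: measurable_funM => //; exact: measurable_prod.
  + apply: measurable_funD; first exact: mPoly.
    apply: measurable_funM; [exact: measurable_cst | exact: mPoly].
  + move=> x; rewrite normr_ge0 /= expr0 mul1r -mulrDl normrM.
    apply: ler_pM; [exact: normr_ge0 | exact: normr_ge0 | exact: hF | ].
    rewrite normr_prod; apply: ler_prod => j _; rewrite normr_ge0 /=.
    exact: hF.
  rewrite ED; last 4 first.
  + exact: mPoly.
  + apply: measurable_funM; [exact: measurable_cst | exact: mPoly].
  + by move=> x; exact: PG.
  + by move=> x; rewrite mulr_ge0 ?Mge0 ?PG.
  rewrite EZ; last 3 first.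
  + exact: Mge0.
  + exact: mPoly.
  + by move=> x; exact: PG.
  have h1 := EC t r t (leqnn t).
  have h2 := EC 0%N r 0%N (leqnn 0).
  rewrite (@E0 _ _ _ P Z) mule1 in h2.
  set A := (X in X%:E * _) in h1.
  set B := (X in X%:E) in h2.
  apply: le_trans (leeD h1 (lee_wpmul2l _ h2)) _; first by rewrite lee_fin Mge0.
  have eB : (MM t)%:E * B%:E = B%:E * 'E_P[fun x => (`|Z x| ^+ t)%R].
    by rewrite /MM -(@EM _ _ _ P Z L hL hZ) muleC.
  rewrite eB -ge0_muleDl; last 2 first.
  + by rewrite lee_fin /A mulr_ge0 ?divr_ge0 ?mulr_ge0 ?exprn_ge0 // ltW.
  + by rewrite lee_fin /B mulr_ge0 ?divr_ge0 ?mulr_ge0 ?exprn_ge0 // ltW.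
  apply: lee_wpmul2r; first exact: E_ge0.
  rewrite lee_fin /A /B hdd -hD' (perm_size pl) /= add0n subn0 hD' addKn.
  set S0 := (\sum_(j <- r) j)%N.
  idtac.
  have hf := fact_mul_le t S0.
  have tf0 : (0 < (t`!)%:R :> R)%R by rewrite ltr0n fact_gt0.
  have key : ((S0`!)%:R <= ((t + S0)`!)%:R / (t`!)%:R :> R)%R.
    by rewrite ler_pdivlMr // -natrM ler_nat mulnC.
  set K := (2 ^+ size r * L ^+ S0)%R.
  have K0 : (0 <= K)%R by rewrite mulr_ge0 ?exprn_ge0 // ltW.
  have e3 : (K * (S0`!)%:R / (0`!)%:R = K * (S0`!)%:R)%R.
    by rewrite fact0 divr1.
  rewrite e3.
  have : (K * (S0`!)%:R <= K * (((t + S0)`!)%:R / (t`!)%:R))%R.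
    by rewrite ler_wpM2l.
  move=> h4; apply: le_trans (lerD (lexx _) h4) _.
  rewrite le_eqVlt; apply/orP; left; apply/eqP; rewrite /K exprS; ring.
Qed.
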